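(* Let $X$ be a set and $f=(f_1,\ldots,f_m):X\to\mathbb{R}^m$ a mapping such that $f(X)$ is convex. Then the following are equivalent: $(\alpha)$ $\mathrm{WE}(f,X)=\mathrm{E}(f,X)$; $(\beta)$ $\displaystyle\bigcup_{\emptyset\neq I\subseteq M}\mathrm{E}(f_I,X)\subseteq\mathrm{E}(f,X)$, where $M=\{1,\ldots,m\}$.
   Context: Let $M=\{1,\ldots,m\}$. For a nonempty $I\subseteq M$ and $y,y'\in\mathbb{R}^m$: $y\lneq_I y'$ means $y_i\leq y'_i$ for all $i\in I$ and $y_j<y'_j$ for some $j\in I$; $y<_I y'$ means $y_i<y'_i$ for all $i\in I$. For $Y\subseteq\mathbb{R}^m$, $\mathrm{M}_I Y$ (resp. $\mathrm{WM}_I Y$) is the set of all $y'\in Y$ for which there is no $y\in Y$ with $y\lneq_I y'$ (resp. $y<_I y'$). For $f=(f_1,\ldots,f_m):X\to\mathbb{R}^m$ and $I=\{i_1<\cdots<i_k\}$, $f_I=(f_{i_1},\ldots,f_{i_k})$, and $\mathrm{E}(f_I,X)=f^{-1}(\mathrm{M}_I f(X))$, $\mathrm{WE}(f_I,X)=f^{-1}(\mathrm{WM}_I f(X))$; $\mathrm{E}(f,X)=\mathrm{E}(f_M,X)$, $\mathrm{WE}(f,X)=\mathrm{WE}(f_M,X)$. *)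

(* Defs.v *)
From Stdlib Require Import Reals.
From mathcomp Require Import all_boot.
Set Implicit Arguments.
Unset Strict Implicit.

(* points of R^m: coordinates indexed by 'I_m = {0,...,m-1} (stands for M) *)
Definition vec (m : nat) := 'I_m -> R.

Definition leqI (m : nat) (I : {set 'I_m}) (y y' : vec m) : Prop :=
  (forall i, i \in I -> Rle (y i) (y' i)) /\ (exists j, j \in I /\ Rlt (y j) (y' j)).

Definition ltI (m : nat) (I : {set 'I_m}) (y y' : vec m) : Prop :=
  forall i, i \in I -> Rlt (y i) (y' i).

Definition MinI (m : nat) (I : {set 'I_m}) (Y : vec m -> Prop) (y' : vec m) : Prop :=
  Y y' /\ ~ (exists y, Y y /\ leqI I y y').
Definition WMinI (m : nat) (I : {set 'I_m}) (Y : vec m -> Prop) (y' : vec m) : Prop :=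
  Y y' /\ ~ (exists y, Y y /\ ltI I y y').

Definition fimg (X : Type) (m : nat) (f : X -> vec m) : vec m -> Prop :=
  fun y => exists x, f x = y.

Definition EffI (X : Type) (m : nat) (f : X -> vec m) (I : {set 'I_m}) : X -> Prop :=
  fun x => MinI I (fimg f) (f x).
Definition WEffI (X : Type) (m : nat) (f : X -> vec m) (I : {set 'I_m}) : X -> Prop :=
  fun x => WMinI I (fimg f) (f x).

Definition Eff (X : Type) (m : nat) (f : X -> vec m) : X -> Prop := EffI f setT.
Definition WEff (X : Type) (m : nat) (f : X -> vec m) : X -> Prop := WEffI f setT.

Definition convex (m : nat) (Y : vec m -> Prop) : Prop :=
  forall y1 y2, Y y1 -> Y y2 -> forall t : R, Rle 0 t /\ Rle t 1 ->
    Y (fun i => Rplus (Rmult t (y1 i)) (Rmult (Rminus 1 t) (y2 i))).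

(* Main.v *)
Require Import Defs.
From Stdlib Require Import Reals Lra Psatz Classical.
From mathcomp Require Import all_boot.
Local Open Scope R_scope.
Set Implicit Arguments.
Unset Strict Implicit.

Definition ltb (a b : R) : bool := if Rlt_dec a b then true else false.

Lemma ltbP a b : ltb a b = true <-> Rlt a b.
Proof. unfold ltb; destruct (Rlt_dec a b); split; auto; discriminate. Qed.

Definition NS (m : nat) (z y : vec m) : {set 'I_m} := [set i | ~~ ltb (z i) (y i)].

Lemma fold_min_le (m : nat) (e : 'I_m -> R) (l : seq 'I_m) i :
  i \in l -> Rle (foldr Rmin 1 (map e l)) (e i).
Proof.
elim: l => [|a l IH] //=. rewrite in_cons => /orP [/eqP -> | Hi].
- apply Rmin_l.
- eapply Rle_trans; [apply Rmin_r | exact (IH Hi)].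
Qed.

Lemma fold_min_pos (m : nat) (e : 'I_m -> R) (l : seq 'I_m) :
  (forall i, Rlt 0 (e i)) -> Rlt 0 (foldr Rmin 1 (map e l)).
Proof.
move=> He; elim: l => [|a l IH] /=; first lra.
apply Rmin_glb_lt; auto.
Qed.

Definition fsum (m : nat) (g : 'I_m -> R) (l : seq 'I_m) :=
  foldr (fun i a => Rplus (g i) a) 0 l.

Lemma fsum_ge (m : nat) (g : 'I_m -> R) (l : seq 'I_m) i :
  (forall k, Rle 0 (g k)) -> i \in l -> Rle (g i) (fsum g l).
Proof.
move=> Hg; elim: l => [|a l IH] //=. rewrite in_cons => /orP [/eqP -> | Hi].
- have : Rle 0 (fsum g l).
  { clear IH; elim: l => [|b l IH2] /=; [lra| have := Hg b; lra]. }
  rewrite /fsum /=. lra.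
- have := IH Hi; have := Hg a; rewrite /fsum /=; lra.
Qed.

Lemma fsum_pos (m : nat) (g : 'I_m -> R) (l : seq 'I_m) :
  (forall k, Rle 0 (g k)) -> Rle 0 (fsum g l).
Proof. move=> Hg; elim: l => [|b l IH2] /=; [rewrite /fsum /=; lra| have := Hg b; rewrite /fsum /= in IH2 *; lra]. Qed.

Lemma step (m : nat) (Y : vec m -> Prop) (hconv : convex Y) (y : vec m)
  (H : forall J : {set 'I_m}, J != set0 -> exists w, Y w /\ leqI J w y)
  (z : vec m) (Yz : Y z) (Hle : forall i, Rle (z i) (y i)) (Hne : NS z y != set0) :
  exists v, Y v /\ (forall i, Rle (v i) (y i)) /\ NS v y \proper NS z y.
Proof.
have [w [Yw [Hw [j [Hj Hwj]]]]] := H _ Hne.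
pose e := fun i => if Rlt_dec (z i) (y i) then (y i - z i) else 1.
have Hepos : forall i, Rlt 0 (e i).
{ move=> i; rewrite /e; destruct (Rlt_dec (z i) (y i)); simpl; lra. }
pose d := foldr Rmin 1 (map e (enum 'I_m)).
have dpos : Rlt 0 d by apply fold_min_pos.
have dle : forall i, Rle d (e i) by move=> i; apply fold_min_le; rewrite mem_enum.
pose g := fun i => Rabs (w i - z i).
have gpos : forall k, Rle 0 (g k) by move=> k; apply Rabs_pos.
pose D := fsum g (enum 'I_m).
have Dpos : Rle 0 D by apply fsum_pos.
have Dge : forall i, Rle (g i) D by move=> i; apply fsum_ge => //; rewrite mem_enum.
pose s := (d / (D + d)).
have Hs1 : (s * (D + d) = d) by rewrite /s; field; lra.
have Hs0 : Rlt 0 s by rewrite /s; apply Rdiv_lt_0_compat; lra.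
have HsD : Rlt (s * D) d by have := Rmult_lt_0_compat _ _ Hs0 dpos; nra.
have Hsle : Rle s 1 by nra.
have Yv := hconv z w Yz Yw (1 - s) (conj (ltac:(lra) : Rle 0 (1 - s)) (ltac:(lra) : Rle (1 - s) 1)).
set v := (fun i => _) in Yv.
have Hv : forall i, v i = (z i + s * (w i - z i)) by move=> i; rewrite /v; ring.
have Hstrict : forall i, Rlt (z i) (y i) -> Rlt (v i) (y i).
{ move=> i Hi; rewrite Hv.
  have := dle i; rewrite /e; case: Rlt_dec => //= _ Hd.
  have := Dge i; rewrite /g => HD.
  have := Rle_abs (w i - z i).
  have : Rle (s * Rabs (w i - z i)) (s * D) by apply Rmult_le_compat_l; lra.
  nra. }
exists v; split => //; split.
- move=> i. case: (Rlt_dec (z i) (y i)) => Hi.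
  + left; exact: Hstrict.
  + have Hiz : i \in NS z y by rewrite inE /ltb; case: Rlt_dec.
    have := Hw i Hiz; have := Hle i; rewrite Hv; nra.
- apply/properP; split.
  + apply/subsetP => i. rewrite !inE. apply: contra => /ltbP Hi.
    apply/ltbP; exact: Hstrict.
  + exists j => //. rewrite inE negbK. apply/ltbP.
    have Hzj : z j = y j.
    { move: Hj; rewrite inE /ltb; case: Rlt_dec => // Hn _; have := Hle j; lra. }
    rewrite Hv Hzj; nra.
Qed.

Lemma core (m : nat) (Y : vec m -> Prop) (hconv : convex Y) (y : vec m)
  (H : forall J : {set 'I_m}, J != set0 -> exists w, Y w /\ leqI J w y) :
  forall n z, Y z -> (forall i, Rle (z i) (y i)) -> (#|NS z y| <= n)%N ->
  exists v, Y v /\ ltI setT v y.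
Proof.
elim=> [|n IH] z Yz Hle Hc; case: (boolP (NS z y == set0)) => Hne.
- exists z; split => // i _. apply/ltbP. move/eqP: Hne => /setP /(_ i).
  by rewrite !inE; case: (ltb _ _).
- by move: Hc; rewrite leqn0 cards_eq0 (negbTE Hne).
- exists z; split => // i _. apply/ltbP. move/eqP: Hne => /setP /(_ i).
  by rewrite !inE; case: (ltb _ _).
- have [v [Yv [Hv Hp]]] := step hconv H Yz Hle Hne.
  apply: (IH v Yv Hv). by rewrite -ltnS (leq_trans (proper_card Hp) Hc).
Qed.

Theorem corollary6p1 (X : Type) (m : nat) (hm : (0 < m)%N)
  (f : X -> vec m) (hconv : convex (fimg f)) :
  (forall x, WEff f x <-> Eff f x)
  <->
  (forall x, (exists I : {set 'I_m}, I != set0 /\ EffI f I x) -> Eff f x).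
Proof.
split.
- move=> Ha x [I [HI [Hx HE]]]. apply Ha. split => //.
  move=> [y [Yy Hlt]]. apply HE. exists y; split => //. split.
  + move=> i _; left; apply Hlt; by rewrite inE.
  + have [j Hj] := set0Pn _ HI. exists j; split => //; apply Hlt; by rewrite inE.
- move=> Hb x; split.
  + move=> [Hx HW]. apply NNPP => HnE.
    have H : forall J : {set 'I_m}, J != set0 -> exists w, fimg f w /\ leqI J w (f x).
    { move=> J HJ. apply NNPP => Hn. apply HnE, Hb. exists J; split => //. }
    have [v [Yv Hv]] := core (n := #|NS (f x) (f x)|) hconv H Hx
       (fun i => Rle_refl _) (leqnn _).
    apply HW; by exists v.
  + move=> [Hx HE]; split => //. move=> [y [Yy Hlt]]. apply HE. exists y; split => //.
    split.
    * move=> i _; left; apply Hlt; by rewrite inE.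
    * exists (Ordinal hm); split; [by rewrite inE | apply Hlt; by rewrite inE].
Qed.
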